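(* Let $G=([n],E)$ be an oriented graph with $|\mathcal{P}(G)|\ge 1$ and associated poset $P=([n],\le_G)$. If $\dim P\ge 3$, then \[\max_{\sigma,\rho\in\mathcal{P}(G)} d_K(\sigma,\rho)<|I(P)|.\]
   Context: Write a permutation $\sigma\in S_n$ as $\sigma=\sigma_1\cdots\sigma_n$. A permutation $\sigma$ satisfies an oriented graph $G=([n],E)$ if $\sigma_u>\sigma_v$ for every oriented edge $u\to v\in E$; $\mathcal{P}(G)$ is the set of permutations satisfying $G$. Write $u\rightsquigarrow v$ if there is an oriented path from $u$ to $v$ in $G$. The poset $P=([n],\le_G)$ is defined by $a\le_G b$ iff $a\rightsquigarrow b$ or $a=b$. The dimension $\dim P$ is the smallest number of total orders on $[n]$ whose intersection is $\le_G$. $I(P)=\{(i,j): i<j,\ i\not\rightsquigarrow j,\ j\not\rightsquigarrow i\}$. For $\sigma,\rho\in S_n$, a pair $i<j$ is discordant if $(\sigma_i-\sigma_j)(\rho_i-\rho_j)<0$; $d_K(\sigma,\rho)$ is the number of discordant pairs. *)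

(* Defs.v *)
From mathcomp Require Import all_boot all_order all_fingroup.
Set Implicit Arguments. Unset Strict Implicit. Unset Printing Implicit Defensive.

(* Vertex set [n] is represented by 'I_n; a permutation sigma in S_n is a
   {perm 'I_n}, with sigma_u := sigma u (values shifted to 0..n-1, which does
   not affect any comparison). *)

Definition oriented_graph (n : nat) (E : rel 'I_n) : Prop :=
  forall u v : 'I_n, E u v -> (u != v) && ~~ E v u.

Definition satisfies (n : nat) (E : rel 'I_n) (s : {perm 'I_n}) : bool :=
  [forall u, forall v, E u v ==> (s v < s u)%N].

Definition PG (n : nat) (E : rel 'I_n) : {set {perm 'I_n}} :=
  [set s | satisfies E s].

Definition reach (n : nat) (E : rel 'I_n) (u v : 'I_n) : bool :=
  [exists w, E u w && connect E w v].

Definition leG (n : nat) (E : rel 'I_n) (a b : 'I_n) : bool :=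
  reach E a b || (a == b).

Definition total_order (n : nat) (L : rel 'I_n) : Prop :=
  [/\ reflexive L, antisymmetric L, transitive L & total L].

Definition realizer (n : nat) (R : rel 'I_n) (Ls : seq (rel 'I_n)) : Prop :=
  (forall i, (i < size Ls)%N -> total_order (nth (fun _ _ => true) Ls i)) /\
  (forall a b, R a b = all (fun L : rel 'I_n => L a b) Ls).

(* dim P >= k : every realizer of P has at least k total orders, and some
   realizer exists (so that dim P is well defined). *)
Definition dim_ge (n : nat) (R : rel 'I_n) (k : nat) : Prop :=
  (exists Ls, realizer R Ls) /\ (forall Ls, realizer R Ls -> (k <= size Ls)%N).

Definition incomp (n : nat) (E : rel 'I_n) : {set 'I_n * 'I_n} :=
  [set p : 'I_n * 'I_n | (p.1 < p.2)%N && ~~ reach E p.1 p.2 && ~~ reach E p.2 p.1].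

Definition discordant (n : nat) (s r : {perm 'I_n}) (i j : 'I_n) : bool :=
  ((s i < s j) && (r j < r i)) || ((s j < s i) && (r i < r j)).

Definition dK (n : nat) (s r : {perm 'I_n}) : nat :=
  #|[set p : 'I_n * 'I_n | (p.1 < p.2)%N && discordant s r p.1 p.2]|.

(* Main.v *)
Require Import Defs.
From mathcomp Require Import all_boot all_order all_fingroup.
From mathcomp Require Import zify.
Set Implicit Arguments. Unset Strict Implicit.

Section Aux.
Variables (n : nat) (E : rel 'I_n).

Lemma sat_edge (s : {perm 'I_n}) : s \in PG E -> forall u v, E u v -> (s v < s u)%N.
Proof.
rewrite inE => /forallP H u v e.
by move: (H u) => /forallP /(_ v) /implyP; apply.
Qed.

Lemma sat_reach (s : {perm 'I_n}) : s \in PG E -> forall u v, reach E u v -> (s v < s u)%N.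
Proof.
move=> hs u v /existsP[w /andP[euw]] /connectP[p pth ->].
have h: (s (last w p) <= s w)%N.
  elim: p {euw} w pth => [|x p IH] w //= /andP[ewx pth].
  exact: leq_trans (IH _ pth) (ltnW (sat_edge hs ewx)).
 exact: leq_ltn_trans h (sat_edge hs euw).
Qed.

Lemma total_of (s : {perm 'I_n}) : total_order (fun a b : 'I_n => (s b <= s a)%N).
Proof.
split.
- by move=> a; exact: leqnn.
- move=> a b /andP[h1 h2]; apply: (perm_inj (s:=s)); apply: val_inj; apply/eqP.
  by rewrite eqn_leq h1 h2.
- by move=> a b c h1 h2; exact: leq_trans h2 h1.
- by move=> a b; exact: leq_total.
Qed.

End Aux.

Theorem mainTheorem10 (n : nat) (E : rel 'I_n) :
  oriented_graph E ->
  (1 <= #|PG E|)%N ->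
  dim_ge (leG E) 3 ->
  forall s r : {perm 'I_n}, s \in PG E -> r \in PG E ->
    (dK s r < #|incomp E|)%N.
Proof.
move=> _ _ [_ Hdim] s r hs hr.
rewrite /dK; set D := [set _ | _].
have sub : D \subset incomp E.
  apply/subsetP => [[i j]]; rewrite !inE /= => /andP[lt dis].
  rewrite lt /=; apply/andP; split; apply/negP => hre; move: dis; rewrite /discordant;
  have := sat_reach hs hre; have := sat_reach hr hre; move=> h1 h2;
  case/orP => /andP[a b]; lia.
have := subset_leqif_card sub; case=> le eqc.
rewrite ltn_neqAle le andbT eqc; apply/negP => sub2.
have : realizer (leG E) [:: (fun a b : 'I_n => (s b <= s a)%N); (fun a b : 'I_n => (r b <= r a)%N)].
  split.
    by case=> [|[|i]] //= _; apply: total_of.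
  move=> a b /=; rewrite andbT /leG; apply/idP/idP.
    case/orP => [h|/eqP->]; last by rewrite !leqnn.
    have := sat_reach hs h; have := sat_reach hr h; move=> h1 h2.
    by rewrite ltnW // ltnW.
  move/andP=> [h1 h2]; case: (eqVneq a b) => [->|ne]; first by rewrite orbT.
  case hab: (reach E a b) => //=.
  case hba: (reach E b a).
    have := sat_reach hs hba; lia.
  case: (ltngtP a b) => [lt|gt|eq].
  - have : (a, b) \in incomp E by rewrite inE /= lt hab hba.
    move/(subsetP sub2); rewrite inE /= /discordant => /andP[_].
    case/orP => /andP[x y]; lia.
  - have : (b, a) \in incomp E by rewrite inE /= gt hab hba.
    move/(subsetP sub2); rewrite inE /= /discordant => /andP[_].
    case/orP => /andP[x y]; lia.
  - by move: ne; rewrite (val_inj eq) eqxx.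
by move/Hdim.
Qed.
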